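(* Let $K>0$, $D>0$, $\sigma>0$, $r\in\mathbf{R}$ and $0<\tau<T$. For $S_->0$ define \[ V(S_-,\tau)=\begin{cases}(S_--D)\,N\!\left(\bar d+\sigma\sqrt{T-\tau}\right)-Ke^{-r(T-\tau)}N(\bar d), & S_->D,\\ 0, & S_-\le D,\end{cases} \qquad \bar d=\frac{\ln(S_--D)-\ln K+\left(r-\frac12\sigma^2\right)(T-\tau)}{\sigma\sqrt{T-\tau}}, \] where $N$ is the standard normal cumulative distribution function. Fix $S^*>D$ and an integer $M\ge1$; set $S_i=D+i\,\frac{S^*-D}{M}$ for $i=0,\dots,M$ and \[ \alpha_i=\frac{M}{S^*-D}\left[V(S_i,\tau)-V(S_{i-1},\tau)\right],\quad i=1,\dots,M . \] Define \[ V_1^+(S_-,\tau)=\sum_{i=1}^M\left[\alpha_i(S_--S_{i-1})+V(S_{i-1},\tau)\right]\chi_{[S_{i-1},S_i]}(S_-),\qquad V_2^+(S_-,\tau)=\left[(S_--S^* )+V(S^*,\tau)\right]\chi_{[S^*,\infty)}(S_-), \] where $\chi_I$ is the characteristic function of the set $I$. Then $V(S_-,\tau)\le V_1^+(S_-,\tau)+V_2^+(S_-,\tau)$ for all $S_->D$, and the function $V_1^++V_2^+$ is piecewise linear and non-negative. If $S_-\le D$, then $V(S_-,\tau)=0$.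
   Context: $V(S_-,\tau)$ is the value, just before a dividend $D$ is paid at time $\tau$, of a European call option with strike $K$ and maturity $T$ in a Black-Scholes economy (risk-free rate $r$, volatility $\sigma$), as a function of the stock price $S_-$ just before the dividend payment. Note $V(S_0,\tau)=V(D,\tau)=0$. *)

(* Defs.v *)
From Stdlib Require Import Reals Lra List.
From Coquelicot Require Import Coquelicot.
Open Scope R_scope.

Definition normal_pdf (t : R) : R := exp (- (t ^ 2) / 2) / sqrt (2 * PI).
Definition Ncdf (x : R) : R := RInt_gen normal_pdf (Rbar_locally m_infty) (at_point x).

Definition dbar (K D sigma r T tau S : R) : R :=
  (ln (S - D) - ln K + (r - sigma ^ 2 / 2) * (T - tau)) / (sigma * sqrt (T - tau)).

Definition Vcall (K D sigma r T tau S : R) : R :=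
  if Rle_dec S D then 0
  else (S - D) * Ncdf (dbar K D sigma r T tau S + sigma * sqrt (T - tau))
       - K * exp (- r * (T - tau)) * Ncdf (dbar K D sigma r T tau S).

Definition chi_cc (a b x : R) : R :=
  if Rle_dec a x then (if Rle_dec x b then 1 else 0) else 0.
Definition chi_ge (a x : R) : R := if Rle_dec a x then 1 else 0.

Definition node (D Sstar : R) (M i : nat) : R := D + INR i * ((Sstar - D) / INR M).

Definition alpha (K D sigma r T tau Sstar : R) (M i : nat) : R :=
  INR M / (Sstar - D) *
  (Vcall K D sigma r T tau (node D Sstar M i) - Vcall K D sigma r T tau (node D Sstar M (i - 1))).

Definition V1plus (K D sigma r T tau Sstar : R) (M : nat) (S : R) : R :=
  sum_n_m (fun i =>
    (alpha K D sigma r T tau Sstar M i * (S - node D Sstar M (i - 1))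
     + Vcall K D sigma r T tau (node D Sstar M (i - 1)))
    * chi_cc (node D Sstar M (i - 1)) (node D Sstar M i) S) 1 M.

Definition V2plus (K D sigma r T tau Sstar : R) (S : R) : R :=
  ((S - Sstar) + Vcall K D sigma r T tau Sstar) * chi_ge Sstar S.

Definition piecewise_linear (f : R -> R) : Prop :=
  exists pts : list R,
    forall a b : R, a < b -> (forall p, In p pts -> ~ (a < p < b)) ->
      exists c d : R, forall x, a < x < b -> f x = c * x + d.

(* Main.v *)
Require Import Defs.
From Stdlib Require Import Reals List Lra Lia Arith.
From Coquelicot Require Import Coquelicot.
Open Scope R_scope.


Definition gf (t : R) : R := exp (- (t ^ 2)).

Lemma cder (f : R -> R) (x : R) : ex_derive f x -> continuous f x.
Proof. intros H. exact (@ex_derive_continuous R_AbsRing R_NormedModule f x H). Qed.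

Lemma gf_cont : forall t, continuous gf t.
Proof. intros t. apply cder. unfold gf. auto_derive. auto. Qed.

Lemma gf_exRInt : forall a b, ex_RInt gf a b.
Proof. intros. apply (@ex_RInt_continuous R_CompleteNormedModule). intros; apply gf_cont. Qed.

Definition GI (x : R) : R := RInt gf 0 x.

Lemma GI_derive : forall x, is_derive GI x (gf x).
Proof.
  intros x. apply (is_derive_RInt gf GI 0 x).
  - apply filter_forall. intros b. unfold GI. apply (@RInt_correct R_CompleteNormedModule). apply gf_exRInt.
  - apply gf_cont.
Qed.

Definition uf (x t : R) : R := exp (- (x ^ 2) * (1 + t ^ 2)) / (1 + t ^ 2).
Definition UI (x : R) : R := RInt (fun t => uf x t) 0 1.

Lemma uf_derive : forall x t, is_derive (fun z => uf z t) x (-2 * x * exp (- (x ^ 2) * (1 + t ^ 2))).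
Proof.
  intros x t. unfold uf. auto_derive.
  - auto.
  - simpl. field. nra.
Qed.

Lemma uf_cont : forall x t, continuous (uf x) t.
Proof. intros. apply cder. unfold uf. auto_derive. nra. Qed.

Lemma UI_derive : forall x, is_derive UI x (-2 * exp (- (x ^ 2)) * GI x).
Proof.
  intros x.
  assert (H := is_derive_RInt_param uf 0 1 x).
  assert (E : RInt (fun t => Derive (fun u => uf u t) x) 0 1 = -2 * exp (- (x ^ 2)) * GI x).
  { rewrite (@RInt_ext R_CompleteNormedModule _ (fun t => scal (-2 * exp (- (x ^ 2))) (scal x (gf (x * t + 0))))).
    - rewrite (@RInt_scal R_CompleteNormedModule).
      + replace (RInt (fun x0 : R => scal x (gf (x * x0 + 0))) 0 1) with (RInt gf (x*0+0) (x*1+0))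
          by (symmetry; apply (@RInt_comp_lin R_CompleteNormedModule); apply gf_exRInt).
        unfold GI, scal; simpl; unfold mult; simpl. f_equal; f_equal; ring.
      + apply (@ex_RInt_continuous R_CompleteNormedModule). intros. 
        apply (cder (fun y => scal x (gf (x * y + 0)))).
        unfold gf, scal; simpl; unfold mult; simpl. auto_derive. auto.
    - intros t _. replace (Derive _ x) with (-2 * x * exp (- (x ^ 2) * (1 + t ^ 2)))
        by (symmetry; apply is_derive_unique; apply uf_derive).
      unfold gf, scal; simpl; unfold mult; simpl.
      replace (- (x * (x * 1)) * (1 + t * (t * 1))) with (- (x * (x * 1)) + - ((x * t + 0) * ((x * t + 0) * 1))) by ring.
      rewrite exp_plus. ring. }
  rewrite <- E. unfold UI. apply H.
  - apply filter_forall. intros y t _. eexists. apply uf_derive.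
  - intros t _.
    apply continuity_2d_pt_ext with (f := fun u v => -2 * u * exp (- (u ^ 2) * (1 + v ^ 2))).
    { intros u v. symmetry. apply is_derive_unique. apply uf_derive. }
    apply continuity_2d_pt_mult.
    + apply continuity_2d_pt_mult. apply continuity_2d_pt_const. apply continuity_2d_pt_id1.
    + apply continuity_1d_2d_pt_comp with (f := exp).
      * apply derivable_continuous_pt. apply derivable_pt_exp.
      * apply continuity_2d_pt_mult.
        -- apply continuity_2d_pt_opp. apply continuity_2d_pt_mult. apply continuity_2d_pt_id1.
           apply continuity_2d_pt_mult. apply continuity_2d_pt_id1. apply continuity_2d_pt_const.
        -- apply continuity_2d_pt_plus. apply continuity_2d_pt_const.
           apply continuity_2d_pt_mult. apply continuity_2d_pt_id2.
           apply continuity_2d_pt_mult. apply continuity_2d_pt_id2. apply continuity_2d_pt_const.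
  - apply filter_forall. intros y. apply (@ex_RInt_continuous R_CompleteNormedModule). intros; apply uf_cont.
Qed.

Definition hG (x : R) : R := UI x + GI x ^ 2.

Lemma hG_derive : forall x, is_derive hG x 0.
Proof.
  intros x. unfold hG.
  replace 0 with (-2 * exp (- (x ^ 2)) * GI x + INR 2 * gf x * GI x ^ Init.Nat.pred 2)
    by (unfold gf; simpl; ring).
  apply (is_derive_plus UI (fun y => GI y ^ 2)). apply UI_derive.
  apply (is_derive_pow GI 2 x (gf x)). apply GI_derive.
Qed.

Lemma cont_of_derive (f : R -> R) x l : is_derive f x l -> continuity_pt f x.
Proof. intros H. apply continuity_pt_filterlim. apply cder. exists l. exact H. Qed.

Lemma UI_0 : UI 0 = PI / 4.
Proof.
  unfold UI. rewrite <- atan_1.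
  rewrite (@RInt_ext R_CompleteNormedModule _ (fun t => / (1 + t ^ 2))).
  - assert (HI : is_RInt (fun t => / (1 + t ^ 2)) 0 1 (minus (atan 1) (atan 0))).
    { apply (@is_RInt_derive R_CompleteNormedModule atan).
    + intros x _. apply is_derive_Reals. apply derivable_pt_lim_atan.
    + intros x _. apply cder. auto_derive. nra. }
    rewrite (is_RInt_unique _ _ _ _ HI). rewrite atan_0. unfold minus, plus, opp. simpl. ring.
  - intros x _. unfold uf. simpl. rewrite Rmult_0_l, Ropp_0, Rmult_0_l, exp_0. field. nra.
Qed.

Lemma UI_ge0 : forall x, 0 <= UI x.
Proof.
  intros x. unfold UI. apply RInt_ge_0. lra.
  apply (@ex_RInt_continuous R_CompleteNormedModule). intros; apply uf_cont.
  intros t _. unfold uf. apply Rlt_le. apply Rdiv_lt_0_compat. apply exp_pos. nra.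
Qed.

Lemma GI_sq_bound : forall x, GI x ^ 2 <= PI / 4.
Proof.
  intros x.
  assert (H : hG x = hG 0).
  { destruct (MVT_gen hG 0 x (fun _ => 0)) as [c [_ Hc]].
    - intros y _. apply hG_derive.
    - intros y _. eapply cont_of_derive. apply hG_derive.
    - lra. }
  unfold hG in H. rewrite UI_0 in H. unfold GI at 2 in H. rewrite RInt_point in H.
  pose proof (UI_ge0 x). unfold zero in H; simpl in H. nra.
Qed.

Lemma GI_bound : forall x, Rabs (GI x) <= sqrt PI / 2.
Proof.
  intros x. pose proof (GI_sq_bound x). pose proof PI_RGT_0.
  rewrite <- (sqrt_Rsqr (Rabs (GI x))) by apply Rabs_pos.
  replace (sqrt PI / 2) with (sqrt (PI / 4)).
  - apply sqrt_le_1_alt. rewrite <- Rsqr_abs. unfold Rsqr. simpl in H. lra.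
  - rewrite sqrt_div_alt by lra. replace 4 with (2*2) by ring. rewrite sqrt_square by lra. reflexivity.
Qed.


Lemma pdf_cont : forall t, continuous normal_pdf t.
Proof. intros t. apply cder. unfold normal_pdf. auto_derive. auto. Qed.

Lemma pdf_exRInt : forall a b, ex_RInt normal_pdf a b.
Proof. intros. apply (@ex_RInt_continuous R_CompleteNormedModule). intros; apply pdf_cont. Qed.

Lemma pdf_pos : forall t, 0 < normal_pdf t.
Proof.
  intros t. unfold normal_pdf. apply Rdiv_lt_0_compat. apply exp_pos.
  apply sqrt_lt_R0. pose proof PI_RGT_0. lra.
Qed.

Definition PP (y : R) : R := RInt normal_pdf 0 y.

Lemma PP_derive : forall x, is_derive PP x (normal_pdf x).
Proof.
  intros x. apply (is_derive_RInt normal_pdf PP 0 x).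
  - apply filter_forall. intros b. unfold PP. apply (@RInt_correct R_CompleteNormedModule). apply pdf_exRInt.
  - apply pdf_cont.
Qed.

Lemma PP_diff : forall a b, PP b - PP a = RInt normal_pdf a b.
Proof.
  intros a b. unfold PP.
  rewrite <- (@RInt_Chasles R_CompleteNormedModule normal_pdf 0 a b) by apply pdf_exRInt.
  unfold plus; simpl. ring.
Qed.

Lemma PP_mono : forall a b, a <= b -> PP a <= PP b.
Proof.
  intros a b Hab. cut (0 <= PP b - PP a). lra. rewrite PP_diff.
  apply RInt_ge_0. auto. apply pdf_exRInt. intros; apply Rlt_le, pdf_pos.
Qed.

Lemma PP_GI : forall y, PP y = sqrt 2 / sqrt (2 * PI) * GI (/ sqrt 2 * y).
Proof.
  intros y. pose proof PI_RGT_0.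
  assert (H2 : 0 < sqrt 2) by (apply sqrt_lt_R0; lra).
  unfold PP, GI.
  rewrite (@RInt_ext R_CompleteNormedModule _ (fun t => scal (sqrt 2 / sqrt (2 * PI)) (scal (/ sqrt 2) (gf (/ sqrt 2 * t + 0))))).
  - rewrite (@RInt_scal R_CompleteNormedModule).
    + replace (RInt (fun x0 : R => scal (/ sqrt 2) (gf (/ sqrt 2 * x0 + 0))) 0 y) with (RInt gf (/ sqrt 2 *0+0) (/ sqrt 2 *y+0))
          by (symmetry; apply (@RInt_comp_lin R_CompleteNormedModule); apply gf_exRInt).
      unfold scal; simpl; unfold mult; simpl. f_equal. f_equal; ring.
    + apply (@ex_RInt_continuous R_CompleteNormedModule). intros.
      apply (cder (fun y => scal (/ sqrt 2) (gf (/ sqrt 2 * y + 0)))).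
      unfold gf, scal; simpl; unfold mult; simpl. auto_derive. auto.
  - intros t _. unfold gf, normal_pdf, scal; simpl; unfold mult; simpl.
    replace (- ((/ sqrt 2 * t + 0) * ((/ sqrt 2 * t + 0) * 1))) with (- (t * (t * 1)) / 2).
    + field. split. lra. apply Rgt_not_eq. apply sqrt_lt_R0. lra.
    + replace ((/ sqrt 2 * t + 0) * ((/ sqrt 2 * t + 0) * 1)) with (t * t / (sqrt 2 * sqrt 2)) by (field; lra).
      rewrite sqrt_sqrt by lra. field.
Qed.

Lemma PP_bound : forall y, Rabs (PP y) <= / 2.
Proof.
  intros y. pose proof PI_RGT_0. rewrite PP_GI.
  assert (H2 : 0 < sqrt 2) by (apply sqrt_lt_R0; lra).
  assert (Hp : 0 < sqrt PI) by (apply sqrt_lt_R0; lra).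
  rewrite sqrt_mult by lra.
  replace (sqrt 2 / (sqrt 2 * sqrt PI)) with (/ sqrt PI) by (field; lra).
  rewrite Rabs_mult. rewrite Rabs_right by (apply Rle_ge, Rlt_le, Rinv_0_lt_compat; auto).
  pose proof (GI_bound (/ sqrt 2 * y)).
  apply Rmult_le_reg_l with (sqrt PI). auto.
  rewrite <- Rmult_assoc, Rinv_r by lra. lra.
Qed.

Lemma Ncdf_repr : exists L, L <= / 2 /\ (forall y, Ncdf y = L + PP y)
  /\ (forall a, 0 <= L + PP a)
  /\ (forall eps, 0 < eps -> exists a0, forall a, a <= a0 -> L + PP a < eps).
Proof.
  set (E := fun z => exists a, z = - PP a).
  assert (HB : bound E).
  { exists (/2). intros z [a ->]. pose proof (PP_bound a). apply Rabs_le_between in H. lra. }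
  assert (HE : exists z, E z) by (exists (- PP 0); exists 0; auto).
  destruct (completeness E HB HE) as [L [HL1 HL2]].
  assert (Hge : forall a, 0 <= L + PP a).
  { intros a. assert (E (- PP a)) by (exists a; auto). apply HL1 in H. lra. }
  assert (Hle : L <= / 2).
  { apply HL2. intros z [a ->]. pose proof (PP_bound a). apply Rabs_le_between in H. lra. }
  assert (Hlim : forall eps, 0 < eps -> exists a0, forall a, a <= a0 -> L + PP a < eps).
  { intros eps Heps.
    destruct (Classical_Prop.classic (exists a0, L + PP a0 < eps)) as [[a0 Ha0]|Hn].
    - exists a0. intros a Ha. pose proof (PP_mono a a0 Ha). lra.
    - exfalso. assert (L - eps >= L); [|lra].
      apply Rle_ge. apply HL2. intros z [a ->].
      destruct (Rle_lt_dec (- PP a) (L - eps)) as [h|h]; auto.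
      exfalso. apply Hn. exists a. lra. }
  exists L. split; [auto|]. split; [|split; auto].
  intros y. unfold Ncdf. apply is_RInt_gen_unique.
  intros P [eps Heps].
  destruct (Hlim eps (cond_pos eps)) as [a0 Ha0].
  apply Filter_prod with (Q := fun a => a < a0) (R := fun b => b = y).
  + exists a0. auto.
  + reflexivity.
  + intros a b Ha ->. exists (RInt normal_pdf a y). split.
    * apply (@RInt_correct R_CompleteNormedModule). apply pdf_exRInt.
    * apply Heps.
      unfold ball; simpl; unfold AbsRing_ball, abs, minus, plus, opp; simpl.
      rewrite <- PP_diff. specialize (Hge a). specialize (Ha0 a (Rlt_le _ _ Ha)).
      rewrite Rabs_left1; lra.
Qed.

Lemma Ncdf_diff : forall a b, Ncdf b - Ncdf a = RInt normal_pdf a b.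
Proof.
  intros a b. destruct Ncdf_repr as [L [_ [H _]]]. rewrite !H, <- PP_diff. ring.
Qed.

Lemma Ncdf_derive : forall y, is_derive Ncdf y (normal_pdf y).
Proof.
  intros y. destruct Ncdf_repr as [L [_ [H _]]].
  apply (is_derive_ext (fun x => L + PP x)). intros; rewrite H; auto.
  replace (normal_pdf y) with (0 + normal_pdf y) by ring.
  apply (is_derive_plus (fun _ => L) PP). apply (@is_derive_const R_AbsRing R_NormedModule). apply PP_derive.
Qed.

Lemma Ncdf_ge0 : forall y, 0 <= Ncdf y.
Proof. intros y. destruct Ncdf_repr as [L [_ [H [H2 _]]]]. rewrite H. auto. Qed.

Lemma Ncdf_le1 : forall y, Ncdf y <= 1.
Proof.
  intros y. destruct Ncdf_repr as [L [H1 [H _]]]. rewrite H.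
  pose proof (PP_bound y). apply Rabs_le_between in H0. lra.
Qed.

Lemma Ncdf_mono : forall a b, a <= b -> Ncdf a <= Ncdf b.
Proof.
  intros a b Hab. destruct Ncdf_repr as [L [_ [H _]]]. rewrite !H.
  pose proof (PP_mono a b Hab). lra.
Qed.

Lemma Ncdf_small : forall eps, 0 < eps -> exists a0, forall a, a <= a0 -> Ncdf a < eps.
Proof.
  intros eps He. destruct Ncdf_repr as [L [_ [H [_ H3]]]].
  destruct (H3 eps He) as [a0 Ha0]. exists a0. intros a Ha. rewrite H. auto.
Qed.


Section V.
Variables K D sigma r T tau : R.
Hypothesis HK : 0 < K.
Hypothesis Hsig : 0 < sigma.
Hypothesis HT : tau < T.

Let tp := T - tau.
Let s := sigma * sqrt tp.
Let B := K * exp (- r * tp).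
Let d := dbar K D sigma r T tau.

Lemma tp_pos : 0 < tp. Proof. unfold tp; lra. Qed.
Lemma s_pos : 0 < s. Proof. unfold s. apply Rmult_lt_0_compat; auto. apply sqrt_lt_R0, tp_pos. Qed.
Lemma B_pos : 0 < B. Proof. unfold B. apply Rmult_lt_0_compat; auto. apply exp_pos. Qed.

Definition Vf (X : R) : R := (X - D) * Ncdf (d X + s) - B * Ncdf (d X).

Lemma d_derive : forall X, D < X -> is_derive d X (/ ((X - D) * s)).
Proof.
  intros X HS. unfold d, dbar. pose proof s_pos. auto_derive.
  - lra.
  - fold tp. fold s. field. split; lra.
Qed.


Lemma ds_eq : forall X, D < X -> d X * s = ln (X - D) - ln K + (r - sigma ^ 2 / 2) * tp.
Proof.
  intros X HS. unfold d, dbar. fold tp. fold s. pose proof s_pos. field. lra.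
Qed.

Lemma s2_eq : s ^ 2 = sigma ^ 2 * tp.
Proof. unfold s. pose proof tp_pos. rewrite Rpow_mult_distr. rewrite pow2_sqrt; lra. Qed.

Lemma key_id : forall X, D < X -> (X - D) * exp (- (d X * s) - s ^ 2 / 2) = B.
Proof.
  intros X HS. rewrite ds_eq, s2_eq by auto.
  replace (- (ln (X - D) - ln K + (r - sigma ^ 2 / 2) * tp) - sigma ^ 2 * tp / 2)
    with (- ln (X - D) + (ln K + - r * tp)) by field.
  rewrite !exp_plus, exp_Ropp, !exp_ln by lra. unfold B. field. lra.
Qed.

Lemma pdf_shift : forall t, normal_pdf (t + s) = normal_pdf t * exp (- (t * s) - s ^ 2 / 2).
Proof.
  intros t. unfold normal_pdf.
  replace (- ((t + s) ^ 2) / 2) with (- (t ^ 2) / 2 + (- (t * s) - s ^ 2 / 2)) by field.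
  rewrite exp_plus. field. apply Rgt_not_eq, sqrt_lt_R0. pose proof PI_RGT_0. lra.
Qed.

Lemma key_pdf : forall X, D < X -> (X - D) * normal_pdf (d X + s) = B * normal_pdf (d X).
Proof.
  intros X HS. rewrite pdf_shift. rewrite <- (key_id X HS). ring.
Qed.

Lemma Vf_derive : forall X, D < X -> is_derive Vf X (Ncdf (d X + s)).
Proof.
  intros X HS. unfold Vf.
  pose proof (d_derive X HS) as Hd.
  assert (H1 : is_derive (fun X => Ncdf (d X + s)) X (/ ((X - D) * s) * normal_pdf (d X + s))).
  { apply (is_derive_comp Ncdf (fun X => d X + s)). apply Ncdf_derive.
    replace (/ ((X - D) * s)) with (/ ((X - D) * s) + 0) by ring.
    apply (is_derive_plus d (fun _ => s)). auto. apply (@is_derive_const R_AbsRing R_NormedModule). }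
  assert (H2 : is_derive (fun X => Ncdf (d X)) X (/ ((X - D) * s) * normal_pdf (d X))).
  { apply (is_derive_comp Ncdf d). apply Ncdf_derive. auto. }
  assert (H3 : is_derive (fun X => X - D) X 1).
  { auto_derive; try ring; auto. }
  pose proof (is_derive_mult _ _ _ _ _ H3 H1 (fun n m => Rmult_comm n m)) as H4.
  pose proof (is_derive_scal _ _ B _ H2) as H5.
  pose proof (is_derive_minus _ _ _ _ _ H4 H5) as H6.
  replace (Ncdf (d X + s)) with (minus (plus (mult 1 (Ncdf (d X + s)))
          (mult (X - D) (/ ((X - D) * s) * normal_pdf (d X + s))))
       (B * (/ ((X - D) * s) * normal_pdf (d X)))).
  - exact H6.
  - unfold minus, plus, opp, mult; simpl.
    pose proof s_pos. 
    assert (E : @eq R ((X - D) * (/ ((X - D) * s) * normal_pdf (d X + s))) (/ ((X - D) * s) * ((X - D) * normal_pdf (d X + s))))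
      by ring.
    rewrite E, key_pdf by auto. ring.
Qed.

Lemma Vf_cont : forall X, D < X -> continuity_pt Vf X.
Proof. intros X HX. eapply cont_of_derive. apply Vf_derive. auto. Qed.

Lemma gV_derive : forall X, D < X ->
  is_derive (fun y => Vf y / (y - D)) X (B * Ncdf (d X) / (X - D) ^ 2).
Proof.
  intros X HX.
  assert (H3 : is_derive (fun y => y - D) X 1) by (auto_derive; try ring; auto).
  pose proof (is_derive_div _ _ _ _ _ (Vf_derive X HX) H3) as H.
  replace (B * Ncdf (d X) / (X - D) ^ 2) with ((Ncdf (d X + s) * (X - D) - Vf X * 1) / (X - D) ^ 2).
  - apply H. lra.
  - unfold Vf. field. lra.
Qed.

Lemma gV_mono : forall a b, D < a -> a <= b -> Vf a / (a - D) <= Vf b / (b - D).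
Proof.
  intros a b Ha Hab.
  destruct (MVT_gen (fun y => Vf y / (y - D)) a b (fun X => B * Ncdf (d X) / (X - D) ^ 2)) as [c [Hc Heq]].
  - intros x Hx. rewrite Rmin_left, Rmax_right in Hx by lra. apply gV_derive. lra.
  - intros x Hx. rewrite Rmin_left, Rmax_right in Hx by lra. eapply cont_of_derive. apply gV_derive. lra.
  - rewrite Rmin_left, Rmax_right in Hc by lra.
    assert (0 <= B * Ncdf (d c) / (c - D) ^ 2).
    { apply Rmult_le_pos. apply Rmult_le_pos. apply Rlt_le, B_pos. apply Ncdf_ge0.
      apply Rlt_le, Rinv_0_lt_compat. apply pow_lt. lra. }
    assert (0 <= B * Ncdf (d c) / (c - D) ^ 2 * (b - a)) by (apply Rmult_le_pos; lra).
    lra.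
Qed.

Lemma Vf_first : forall X w, D < X -> X <= w -> Vf X <= (X - D) / (w - D) * Vf w.
Proof.
  intros X w HX Hw. pose proof (gV_mono X w HX Hw).
  replace (Vf X) with ((X - D) * (Vf X / (X - D))) by (field; lra).
  replace ((X - D) / (w - D) * Vf w) with ((X - D) * (Vf w / (w - D))) by (field; lra).
  apply Rmult_le_compat_l; lra.
Qed.

Lemma d_mono : forall a b, D < a -> a <= b -> d a <= d b.
Proof.
  intros a b Ha Hab. unfold d, dbar. fold tp. fold s. pose proof s_pos.
  unfold Rdiv. apply Rmult_le_compat_r. apply Rlt_le, Rinv_0_lt_compat; auto.
  pose proof (ln_le (a - D) (b - D)). lra.
Qed.

Lemma Vf_MVT : forall a b, D < a -> a <= b -> exists c, a <= c <= b /\ Vf b - Vf a = Ncdf (d c + s) * (b - a).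
Proof.
  intros a b Ha Hab.
  destruct (MVT_gen Vf a b (fun X => Ncdf (d X + s))) as [c [Hc Heq]].
  - intros x Hx. rewrite Rmin_left, Rmax_right in Hx by lra. apply Vf_derive. lra.
  - intros x Hx. rewrite Rmin_left, Rmax_right in Hx by lra. apply Vf_cont. lra.
  - rewrite Rmin_left, Rmax_right in Hc by lra. exists c. split; auto.
Qed.

Lemma Vf_convex : forall u X w, D < u -> u <= X -> X <= w -> u < w ->
  Vf X <= Vf u + (Vf w - Vf u) / (w - u) * (X - u).
Proof.
  intros u X w Hu H1 H2 H3.
  destruct (Vf_MVT u X Hu H1) as [c1 [Hc1 E1]].
  destruct (Vf_MVT X w ltac:(lra) H2) as [c2 [Hc2 E2]].
  assert (Hm : Ncdf (d c1 + s) <= Ncdf (d c2 + s)).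
  { apply Ncdf_mono. pose proof (d_mono c1 c2 ltac:(lra) ltac:(lra)). lra. }
  set (m1 := Ncdf (d c1 + s)) in *. set (m2 := Ncdf (d c2 + s)) in *.
  assert (Hs : m1 <= (Vf w - Vf u) / (w - u)).
  { apply Rmult_le_reg_r with (w - u). lra. unfold Rdiv. rewrite Rmult_assoc, Rinv_l by lra.
    assert (m1 * (w - X) <= m2 * (w - X)) by (apply Rmult_le_compat_r; lra). nra. }
  assert (m1 * (X - u) <= (Vf w - Vf u) / (w - u) * (X - u)) by (apply Rmult_le_compat_r; lra).
  lra.
Qed.

Lemma Vf_tail : forall a X, D < a -> a <= X -> Vf X <= Vf a + (X - a).
Proof.
  intros a X Ha HX. destruct (Vf_MVT a X Ha HX) as [c [_ E]].
  pose proof (Ncdf_le1 (d c + s)).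
  assert (Ncdf (d c + s) * (X - a) <= 1 * (X - a)) by (apply Rmult_le_compat_r; lra). lra.
Qed.

Lemma pdf_ineq : forall X t, D < X -> t <= d X -> B * normal_pdf t <= (X - D) * normal_pdf (t + s).
Proof.
  intros X t HX Ht. rewrite pdf_shift. rewrite <- (key_id X HX).
  pose proof (pdf_pos t). pose proof s_pos.
  assert (exp (- (d X * s) - s ^ 2 / 2) <= exp (- (t * s) - s ^ 2 / 2)).
  { destruct (Req_dec t (d X)) as [->|hne]. lra. apply Rlt_le, exp_increasing.
    assert (t * s < d X * s) by (apply Rmult_lt_compat_r; lra). lra. }
  assert (0 < X - D) by lra.
  assert (normal_pdf t * exp (- (d X * s) - s ^ 2 / 2) <= normal_pdf t * exp (- (t * s) - s ^ 2 / 2))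
    by (apply Rmult_le_compat_l; lra).
  nra.
Qed.

Lemma Vf_lower : forall X a, D < X -> a <= d X -> - B * Ncdf a <= Vf X.
Proof.
  intros X a HX Ha. unfold Vf.
  pose proof (Ncdf_diff (a + s) (d X + s)) as E1.
  pose proof (Ncdf_diff a (d X)) as E2.
  assert (E3 : RInt normal_pdf (a + s) (d X + s) = RInt (fun t => normal_pdf (t + s)) a (d X)).
  { transitivity (RInt (fun t => scal 1 (normal_pdf (1 * t + s))) a (d X)).
    - symmetry. replace (a + s) with (1 * a + s) by ring. replace (d X + s) with (1 * d X + s) by ring.
      apply (@RInt_comp_lin R_CompleteNormedModule). apply pdf_exRInt.
    - apply (@RInt_ext R_CompleteNormedModule). intros t _. unfold scal; simpl; unfold mult; simpl.
      rewrite !Rmult_1_l. reflexivity. }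
  assert (HI : B * RInt normal_pdf a (d X) <= (X - D) * RInt (fun t => normal_pdf (t + s)) a (d X)).
  { assert (F1 : forall (f : R -> R) c, ex_RInt f a (d X) -> c * RInt f a (d X) = RInt (fun t => c * f t) a (d X)).
    { intros f c Hf. symmetry. exact (@RInt_scal R_CompleteNormedModule f a (d X) c Hf). }
    assert (Hex : ex_RInt (fun t => normal_pdf (t + s)) a (d X)).
    { apply (@ex_RInt_continuous R_CompleteNormedModule). intros. apply cder. unfold normal_pdf. auto_derive. auto. }
    rewrite !F1; auto. apply RInt_le; auto.
    - apply (@ex_RInt_continuous R_CompleteNormedModule). intros. apply cder. unfold normal_pdf. auto_derive. auto.
    - apply (@ex_RInt_continuous R_CompleteNormedModule). intros. apply cder. unfold normal_pdf. auto_derive. auto.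
    - intros t Ht. apply pdf_ineq; lra.
    - apply pdf_exRInt. }
  rewrite <- E3 in HI. rewrite <- E1, <- E2 in HI.
  pose proof (Ncdf_ge0 (a + s)). pose proof B_pos.
  assert (0 <= (X - D) * Ncdf (a + s)) by (apply Rmult_le_pos; lra).
  nra.
Qed.

Lemma Vf_nonneg : forall X, D < X -> 0 <= Vf X.
Proof.
  intros X HX. destruct (Rle_lt_dec 0 (Vf X)) as [h|h]; auto.
  exfalso. pose proof B_pos.
  destruct (Ncdf_small (- Vf X / (2 * B))) as [a0 Ha0].
  { apply Rdiv_lt_0_compat; lra. }
  set (a := Rmin a0 (d X)).
  pose proof (Vf_lower X a HX (Rmin_r _ _)).
  pose proof (Ha0 a (Rmin_l _ _)).
  assert (B * Ncdf a < B * (- Vf X / (2 * B))) by (apply Rmult_lt_compat_l; lra).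
  replace (B * (- Vf X / (2 * B))) with (- Vf X / 2) in H2 by (field; lra).
  lra.
Qed.
End V.


Lemma sum_nonneg : forall (f : nat -> R) n m, (forall k, 0 <= f k) -> 0 <= sum_n_m f n m.
Proof.
  intros f n m H. induction m.
  - destruct n. rewrite sum_n_n. auto. rewrite sum_n_m_zero by lia. unfold zero; simpl; lra.
  - destruct (le_lt_dec n (S m)).
    + rewrite sum_n_Sm by lia. unfold plus; simpl. specialize (H (S m)).
      destruct (le_lt_dec n m). lra. rewrite sum_n_m_zero by lia. unfold zero; simpl. lra.
    + rewrite sum_n_m_zero by lia. unfold zero; simpl; lra.
Qed.

Lemma sum_ge_term : forall (f : nat -> R) n m i, (forall k, 0 <= f k) -> (n <= i <= m)%nat -> f i <= sum_n_m f n m.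
Proof.
  intros f n m i H Hi. induction m.
  - assert (i = 0%nat) by lia. assert (n = 0%nat) by lia. subst. rewrite sum_n_n. lra.
  - rewrite sum_n_Sm by lia. unfold plus; simpl.
    destruct (Nat.eq_dec i (S m)).
    + subst. pose proof (sum_nonneg f n m H). lra.
    + specialize (IHm ltac:(lia)). specialize (H (S m)). lra.
Qed.

Definition aff (a b : R) (f : R -> R) := exists c e, forall x, a < x < b -> f x = c * x + e.

Lemma aff_plus : forall a b f g, aff a b f -> aff a b g -> aff a b (fun x => f x + g x).
Proof.
  intros a b f g [c1 [e1 H1]] [c2 [e2 H2]]. exists (c1 + c2), (e1 + e2). intros x Hx.
  rewrite H1, H2 by auto. ring.
Qed.

Lemma aff_sum : forall a b (G : nat -> R -> R) m,
  (forall i, (1 <= i <= m)%nat -> aff a b (G i)) -> aff a b (fun x => sum_n_m (fun i => G i x) 1 m).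
Proof.
  intros a b G m H. induction m.
  - exists 0, 0. intros x _. rewrite sum_n_m_zero by lia. unfold zero; simpl; ring.
  - destruct m.
    + destruct (H 1%nat ltac:(lia)) as [c [e He]]. exists c, e. intros x Hx. rewrite sum_n_n. auto.
    + destruct IHm as [c1 [e1 H1]]. intros; apply H; lia. destruct (H (S (S m)) ltac:(lia)) as [c2 [e2 H2]].
      exists (c1 + c2), (e1 + e2). intros x Hx. rewrite sum_n_Sm by lia. unfold plus; simpl.
      rewrite H1, H2 by auto. ring.
Qed.

Lemma side_const : forall a b p, ~ (a < p < b) -> a < b ->
  (forall x, a < x < b -> p <= x) \/ (forall x, a < x < b -> ~ p <= x).
Proof.
  intros a b p Hp Hab. destruct (Rle_lt_dec p a).
  - left. intros; lra.
  - right. intros x Hx. assert (b <= p) by (destruct (Rle_lt_dec b p); [auto|exfalso; apply Hp; lra]). lra.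
Qed.

Lemma side_const2 : forall a b q, ~ (a < q < b) -> a < b ->
  (forall x, a < x < b -> x <= q) \/ (forall x, a < x < b -> ~ x <= q).
Proof.
  intros a b q Hq Hab. destruct (Rle_lt_dec b q).
  - left. intros; lra.
  - right. intros x Hx. assert (q <= a) by (destruct (Rle_lt_dec q a); [auto|exfalso; apply Hq; lra]). lra.
Qed.

Lemma chi_cc_const : forall a b p q, ~ (a < p < b) -> ~ (a < q < b) -> a < b ->
  exists c, forall x, a < x < b -> chi_cc p q x = c.
Proof.
  intros a b p q Hp Hq Hab. unfold chi_cc.
  destruct (side_const a b p Hp Hab) as [H1|H1].
  - destruct (side_const2 a b q Hq Hab) as [H2|H2].
    + exists 1. intros x Hx. destruct (Rle_dec p x); [|exfalso; apply n; auto].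
      destruct (Rle_dec x q); [auto|exfalso; apply n; auto].
    + exists 0. intros x Hx. destruct (Rle_dec p x); auto.
      destruct (Rle_dec x q); [exfalso; apply (H2 x); auto|auto].
  - exists 0. intros x Hx. destruct (Rle_dec p x); [exfalso; apply (H1 x); auto|auto].
Qed.

Lemma chi_ge_const : forall a b p, ~ (a < p < b) -> a < b ->
  exists c, forall x, a < x < b -> chi_ge p x = c.
Proof.
  intros a b p Hp Hab. unfold chi_ge.
  destruct (side_const a b p Hp Hab) as [H1|H1].
  - exists 1. intros x Hx. destruct (Rle_dec p x); [auto|exfalso; apply n; auto].
  - exists 0. intros x Hx. destruct (Rle_dec p x); [exfalso; apply (H1 x); auto|auto].
Qed.

Lemma aff_mul_const : forall a b f g c, aff a b f -> (forall x, a < x < b -> g x = c) -> aff a b (fun x => f x * g x).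
Proof.
  intros a b f g c [c1 [e1 H1]] H. exists (c1 * c), (e1 * c). intros x Hx. rewrite H1, H by auto. ring.
Qed.

Lemma aff_lin : forall a b c e, aff a b (fun x => c * (x - e)).
Proof. intros. exists c, (- c * e). intros; ring. Qed.

Section F.
Variables K D sigma r T tau Sstar : R.
Variable M : nat.
Hypotheses (HK : 0 < K) (HD : 0 < D) (Hsig : 0 < sigma) (Htau : 0 < tau) (HT : tau < T)
  (HS : D < Sstar) (HM : (1 <= M)%nat).

Let V := Vcall K D sigma r T tau.
Let nd := node D Sstar M.
Let h := (Sstar - D) / INR M.

Lemma V_eq : forall X, D < X -> V X = Vf K D sigma r T tau X.
Proof. intros X HX. unfold V, Vcall. destruct (Rle_dec X D). lra. reflexivity. Qed.

Lemma V_le : forall X, X <= D -> V X = 0.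
Proof. intros X HX. unfold V, Vcall. destruct (Rle_dec X D). reflexivity. lra. Qed.

Lemma V_nonneg : forall X, 0 <= V X.
Proof.
  intros X. destruct (Rle_lt_dec X D). rewrite V_le; lra. rewrite V_eq by auto. apply Vf_nonneg; auto.
Qed.

Lemma M_pos : 0 < INR M.
Proof. apply lt_0_INR. lia. Qed.

Lemma h_pos : 0 < h.
Proof. unfold h. apply Rdiv_lt_0_compat. lra. apply M_pos. Qed.

Lemma nd_S : forall i, (1 <= i)%nat -> nd i = nd (i - 1)%nat + h.
Proof.
  intros i Hi. unfold nd, node. fold h. rewrite minus_INR by lia. simpl. ring.
Qed.

Lemma nd_0 : nd 0 = D.
Proof. unfold nd, node. simpl. ring. Qed.

Lemma nd_M : nd M = Sstar.
Proof. unfold nd, node. pose proof M_pos. field. lra. Qed.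

Lemma nd_ge : forall i, D <= nd i.
Proof.
  intros i. unfold nd, node. fold h. pose proof h_pos. pose proof (pos_INR i).
  pose proof (Rmult_le_pos _ _ H0 (Rlt_le _ _ H)). lra.
Qed.

Lemma nd_le : forall i, (i <= M)%nat -> nd i <= Sstar.
Proof.
  intros i Hi. rewrite <- nd_M. unfold nd, node. fold h. pose proof h_pos.
  apply le_INR in Hi. apply Rplus_le_compat_l. apply Rmult_le_compat_r; lra.
Qed.

Lemma chord : forall u w X, D <= u -> u < w -> u <= X -> X <= w ->
  V X <= V u + (V w - V u) / (w - u) * (X - u).
Proof.
  intros u w X Hu Huw H1 H2.
  destruct (Req_dec X u) as [->|hne]. { replace (u - u) with 0 by ring. lra. }
  destruct (Req_dec u D) as [->|hne2].
  - rewrite (V_le D) by lra. rewrite !V_eq by lra.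
    pose proof (Vf_first K D sigma r T tau HK Hsig HT X w ltac:(lra) H2).
    replace ((Vf K D sigma r T tau w - 0) / (w - D) * (X - D)) with ((X - D) / (w - D) * Vf K D sigma r T tau w)
      by (field; lra). lra.
  - rewrite !V_eq by lra. apply Vf_convex; auto; lra.
Qed.

Definition termf (i : nat) (x : R) : R :=
  (alpha K D sigma r T tau Sstar M i * (x - node D Sstar M (i - 1))
     + Vcall K D sigma r T tau (node D Sstar M (i - 1)))
    * chi_cc (node D Sstar M (i - 1)) (node D Sstar M i) x.

Lemma alpha_eq : forall i, alpha K D sigma r T tau Sstar M i = (V (nd i) - V (nd (i - 1)%nat)) / h.
Proof.
  intros i. unfold alpha, h. fold V. fold nd. pose proof M_pos. field. split; lra.
Qed.

Lemma term_in : forall i x, (1 <= i)%nat -> nd (i - 1)%nat <= x <= nd i ->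
  termf i x = V (nd (i - 1)%nat) + (V (nd i) - V (nd (i - 1)%nat)) / (nd i - nd (i - 1)%nat) * (x - nd (i - 1)%nat).
Proof.
  intros i x Hi Hx. unfold termf. fold nd. fold V. unfold chi_cc.
  destruct (Rle_dec (nd (i - 1)%nat) x); [|lra]. destruct (Rle_dec x (nd i)); [|lra].
  rewrite alpha_eq. rewrite (nd_S i Hi) at 3. replace (nd (i - 1)%nat + h - nd (i - 1)%nat) with h by ring.
  ring.
Qed.

Lemma term_nonneg : forall i x, 0 <= termf i x.
Proof.
  intros i x. destruct i as [|i].
  - unfold termf. rewrite alpha_eq. simpl. fold nd. fold V.
    replace ((V (nd 0) - V (nd 0)) / h) with 0 by (pose proof h_pos; field; lra).
    unfold chi_cc. pose proof (V_nonneg (nd 0)).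
    destruct (Rle_dec _ _); [destruct (Rle_dec _ _)|]; lra.
  - destruct (Rle_dec (nd (S i - 1)%nat) x) as [h1|h1]; [destruct (Rle_dec x (nd (S i))) as [h2|h2]|].
    + rewrite term_in by (auto; lia).
      pose proof (nd_S (S i) ltac:(lia)). pose proof h_pos.
      set (u := nd (S i - 1)%nat) in *. set (w := nd (S i)) in *.
      pose proof (V_nonneg u). pose proof (V_nonneg w).
      assert (Ht : 0 <= (x - u) / (w - u) <= 1).
      { split. apply Rmult_le_pos. lra. apply Rlt_le, Rinv_0_lt_compat. lra.
        apply Rmult_le_reg_r with (w - u). lra. unfold Rdiv. rewrite Rmult_assoc, Rinv_l by lra. lra. }
      replace ((V w - V u) / (w - u) * (x - u)) with ((V w - V u) * ((x - u) / (w - u))) by (field; lra).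
      set (t := (x - u) / (w - u)) in *. nra.
    + unfold termf. fold nd. unfold chi_cc. destruct (Rle_dec _ _); [destruct (Rle_dec _ _)|]; try lra.
    + unfold termf. fold nd. unfold chi_cc. destruct (Rle_dec _ _); try lra.
Qed.

Lemma find_i : forall n X, (1 <= n)%nat -> D <= X <= nd n -> exists i, (1 <= i <= n)%nat /\ nd (i - 1)%nat <= X <= nd i.
Proof.
  intros n X Hn HX. induction n. lia.
  destruct (Rle_lt_dec X (nd n)) as [h1|h1].
  - destruct n.
    + exists 1%nat. split. lia. simpl. rewrite nd_0. lra.
    + destruct IHn as [i [Hi1 Hi2]]. lia. lra. exists i. split. lia. auto.
  - exists (S n). split. lia. replace (S n - 1)%nat with n by lia. lra.
Qed.

Lemma V2_nonneg : forall X, 0 <= V2plus K D sigma r T tau Sstar X.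
Proof.
  intros X. unfold V2plus, chi_ge. fold V. pose proof (V_nonneg Sstar).
  destruct (Rle_dec Sstar X); lra.
Qed.

Lemma V1_eq : forall X, V1plus K D sigma r T tau Sstar M X = sum_n_m (fun i => termf i X) 1 M.
Proof. intros X. reflexivity. Qed.

Lemma main_bound : forall X, D < X -> V X <= V1plus K D sigma r T tau Sstar M X + V2plus K D sigma r T tau Sstar X.
Proof.
  intros X HX. rewrite V1_eq. pose proof (V2_nonneg X).
  pose proof (sum_nonneg (fun i => termf i X) 1 M (fun k => term_nonneg k X)).
  destruct (Rle_lt_dec X Sstar) as [h1|h1].
  - destruct (find_i M X HM ltac:(rewrite nd_M; lra)) as [i [Hi Hx]].
    pose proof (sum_ge_term (fun i => termf i X) 1 M i (fun k => term_nonneg k X) Hi). simpl in H1.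
    rewrite term_in in H1 by (auto; lia).
    pose proof (nd_S i ltac:(lia)). pose proof h_pos. pose proof (nd_ge (i - 1)).
    pose proof (chord (nd (i - 1)%nat) (nd i) X H4 ltac:(lra) ltac:(lra) ltac:(lra)). lra.
  - unfold V2plus, chi_ge. destruct (Rle_dec Sstar X); [|lra]. fold V.
    rewrite !V_eq by lra. pose proof (Vf_tail K D sigma r T tau HK Hsig HT Sstar X HS ltac:(lra)). lra.
Qed.

Lemma main_nonneg : forall X, 0 <= V1plus K D sigma r T tau Sstar M X + V2plus K D sigma r T tau Sstar X.
Proof.
  intros X. rewrite V1_eq. pose proof (V2_nonneg X).
  pose proof (sum_nonneg (fun i => termf i X) 1 M (fun k => term_nonneg k X)). lra.
Qed.

Lemma main_pl : piecewise_linear (fun X => V1plus K D sigma r T tau Sstar M X + V2plus K D sigma r T tau Sstar X).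
Proof.
  exists (map nd (seq 0 (S M))).
  intros a b Hab Hp.
  assert (Hn : forall k, (k <= M)%nat -> ~ (a < nd k < b)).
  { intros k Hk. apply Hp. apply in_map. apply in_seq. lia. }
  apply (aff_plus a b).
  - apply (aff_sum a b termf M). intros i [hi0 hi].
    + destruct (chi_cc_const a b (nd (i - 1)%nat) (nd i) (Hn (i - 1)%nat ltac:(lia)) (Hn i hi) Hab) as [c Hc].
      unfold termf. fold nd. eapply aff_mul_const; [|exact Hc].
      apply aff_plus. apply aff_lin. exists 0, (V (nd (i - 1)%nat)). intros x _. cbv beta. unfold V, nd. ring.
  - unfold V2plus. destruct (chi_ge_const a b Sstar ltac:(rewrite <- nd_M; apply Hn; lia) Hab) as [c Hc].
    eapply aff_mul_const; [|exact Hc]. exists 1, (- Sstar + V Sstar). intros; unfold V; ring.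
Qed.

End F.

Theorem lemma2 (K D sigma r T tau Sstar : R) (M : nat) :
  0 < K -> 0 < D -> 0 < sigma -> 0 < tau -> tau < T ->
  D < Sstar -> (1 <= M)%nat ->
  (forall S, D < S ->
     Vcall K D sigma r T tau S
     <= V1plus K D sigma r T tau Sstar M S + V2plus K D sigma r T tau Sstar S)
  /\ piecewise_linear (fun S => V1plus K D sigma r T tau Sstar M S + V2plus K D sigma r T tau Sstar S)
  /\ (forall S, 0 <= V1plus K D sigma r T tau Sstar M S + V2plus K D sigma r T tau Sstar S)
  /\ (forall S, 0 < S -> S <= D -> Vcall K D sigma r T tau S = 0).
Proof.
  intros HK HD Hsig Htau HT HS HM.
  split; [|split; [|split]].
  - intros X HX. eapply main_bound; eauto.
  - eapply main_pl; eauto.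
  - intros X. eapply main_nonneg; eauto.
  - intros X _ HX. unfold Vcall. destruct (Rle_dec X D); [reflexivity|lra].
Qed.
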